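(* Let $\varphi$ be a toric plurisubharmonic function on $D(0,1)\subseteq\mathbf{C}^n$ such that near $0$, $\varphi=\frac{c}{2}\log\left(|z^{b_1}|^2+\cdots+|z^{b_r}|^2\right)+O(1)$ with $c>0$ and multi-indices $b_1,\dots,b_r$. Let $P(b)$ denote the convex hull of $\{b_1,\dots,b_r\}$. Then the Newton convex body of $\varphi$ is $P(\varphi)=c\,P(b)+\mathbf{R}^n_{\ge0}$.
   Context: A psh function on $D(0,1)$ is toric if it is invariant under $(z_j)\mapsto(e^{i\theta_j}z_j)$ for all real $\theta_j$; then there is a convex function $g$ on $U=(-\infty,0)^n$, increasing in each variable, with $\varphi(z)=g(\log|z_1|,\dots,\log|z_n|)$. The Newton convex body is $P(\varphi)=\{x\in\mathbf{R}^n:\sup_{y\in U}(\langle x,y\rangle-g(y))<+\infty\}$. $z^b=z_1^{b^{(1)}}\cdots z_n^{b^{(n)}}$; the sum $cP(b)+\mathbf{R}^n_{\ge0}$ is a Minkowski sum. *)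

(* Defs.v *)
From HB Require Import structures.
From mathcomp Require Import all_boot all_order all_algebra.
From mathcomp Require Import all_classical all_reals all_analysis.
Set Implicit Arguments. Unset Strict Implicit. Unset Printing Implicit Defensive.
Import Order.TTheory GRing.Theory Num.Theory.
Local Open Scope ring_scope.
Local Open Scope classical_set_scope.

Definition dotR {R : realType} {n : nat} (x y : 'I_n -> R) : R :=
  \sum_(i < n) x i * y i.

Definition negOrthant {R : realType} {n : nat} : set ('I_n -> R) :=
  [set y | forall i, y i < 0].

Definition convex_on_U {R : realType} {n : nat} (g : ('I_n -> R) -> R) : Prop :=
  forall y1 y2 : 'I_n -> R, negOrthant y1 -> negOrthant y2 ->
  forall t : R, 0 <= t <= 1 ->
    g (fun i => t * y1 i + (1 - t) * y2 i) <= t * g y1 + (1 - t) * g y2.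

Definition increasing_each_var {R : realType} {n : nat}
  (g : ('I_n -> R) -> R) : Prop :=
  forall (y : 'I_n -> R) (i : 'I_n) (s : R), negOrthant y ->
    y i <= s -> s < 0 -> g y <= g (fun j => if j == i then s else y j).

(* toric psh function on D(0,1), via its convex representative g:
   phi(z) = g(log|z_1|, ..., log|z_n|) *)
Definition toric_psh_rep {R : realType} {n : nat} (g : ('I_n -> R) -> R) : Prop :=
  convex_on_U g /\ increasing_each_var g.

Definition newton_body {R : realType} {n : nat} (g : ('I_n -> R) -> R)
  : set ('I_n -> R) :=
  [set x | exists M : R, forall y, negOrthant y -> dotR x y - g y <= M].

Definition natvec {R : realType} {n : nat} (b : 'I_n -> nat) : 'I_n -> R :=
  fun i => (b i)%:R.

(* log|z^b| = <b, y>  when y = (log|z_i|)_i *)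

Definition conv_hull_nat {R : realType} {n r : nat} (b : 'I_r -> 'I_n -> nat)
  : set ('I_n -> R) :=
  [set p | exists w : 'I_r -> R, (forall j, 0 <= w j) /\ \sum_(j < r) w j = 1 /\
     p = (fun i => \sum_(j < r) w j * (b j i)%:R)].

Definition scaled_hull_plus_orthant {R : realType} {n r : nat} (c : R)
  (b : 'I_r -> 'I_n -> nat) : set ('I_n -> R) :=
  [set x | exists p q : 'I_n -> R, conv_hull_nat b p /\ (forall i, 0 <= q i) /\
     x = (fun i => c * p i + q i)].

(* phi = (c/2) log(|z^{b_1}|^2 + ... + |z^{b_r}|^2) + O(1) near 0,
   written on the torus part via y = (log|z_i|)_i: for all y with every
   coordinate below some threshold a (i.e. |z_i| < e^a). *)
Definition near0_log_sing {R : realType} {n r : nat} (g : ('I_n -> R) -> R)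
  (c : R) (b : 'I_r -> 'I_n -> nat) : Prop :=
  exists (a M : R), a < 0 /\ forall y : 'I_n -> R, (forall i, y i < a) ->
    `| g y - c / 2 * ln (\sum_(j < r) expR (2 * dotR (natvec (b j)) y)) | <= M.

(* Main.v *)
Set Warnings "-all".
Require Import Defs.
From HB Require Import structures.
From mathcomp Require Import all_boot all_order all_algebra.
From mathcomp Require Import all_classical all_reals all_analysis.
From mathcomp Require Import ring lra.
Import Order.TTheory GRing.Theory Num.Theory.
Import numFieldTopology.Exports numFieldNormedType.Exports.
Local Open Scope ring_scope.
Local Open Scope classical_set_scope.
Lemma phi_ineq (R : realType) (s u t : R) :
  (Num.min (s - t * u) 0) ^+ 2 <=
  (Num.min s 0) ^+ 2 - 2 * t * u * Num.min s 0 + t ^+ 2 * u ^+ 2.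
Proof.
have [hs|hs] := lerP s 0; have [ha|ha] := lerP (s - t * u) 0;
  rewrite ?(min_l hs) ?(min_l ha) ?(min_r (ltW hs)) ?(min_r (ltW ha)); nra.
Qed.

Lemma mn_sq (R : realType) (s : R) : s * Num.min s 0 = (Num.min s 0) ^+ 2.
Proof.
have [hs|hs] := lerP s 0; rewrite ?(min_l hs) ?(min_r (ltW hs)); nra.
Qed.

Lemma A_le0 (R : realType) (A C : R) : 0 <= C ->
  (forall t, 0 < t -> t < 1 -> 2 * t * A <= t ^+ 2 * C) -> A <= 0.
Proof.
move=> hC H; rewrite leNgt; apply/negP => hA.
pose t := A / (A + C + 1).
have hd : 0 < A + C + 1 by lra.
have ht : t * (A + C + 1) = A by rewrite /t; field; lra.
have t0 : 0 < t by rewrite /t divr_gt0.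
have t1 : t < 1 by rewrite /t ltr_pdivrMr //; lra.
have := H t t0 t1; nra.
Qed.

Lemma conv01 (R : realType) (w t : R) (b : bool) : 0 <= w -> w <= 1 -> 0 < t -> t < 1 ->
  0 <= (1 - t) * w + t * b%:R <= 1.
Proof.
move=> h1 h2 h3 h4; have h5 : 0 <= (1 - t) * w by apply: mulr_ge0; lra.
have h6 : (1 - t) * w <= 1 - t by rewrite ler_piMr //; lra.
by case: b; rewrite /= ?mulr1 ?mulr0 ?addr0; apply/andP; split; lra.
Qed.

Lemma delta_sum (R : realType) r (j0 : 'I_r) (F : 'I_r -> R) :
  \sum_(j < r) (j == j0)%:R * F j = F j0.
Proof.
rewrite (bigD1 j0) //= eqxx mul1r big1 ?addr0 // => j /negbTE ->; by rewrite mul0r.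
Qed.
Lemma cont_sum (R : realType) r (F : 'I_r -> 'rV[R]_r -> R) :
  (forall j, continuous (F j)) -> continuous (fun w => \sum_(j < r) F j w).
Proof. move=> H.
exact: (@continuous_big R 'I_r +%R 0 predT add_continuous 'rV[R]_r (index_enum _) F (fun j _ => H j)).
Qed.

Lemma cont_f (R : realType) n r (B : 'I_r -> 'I_n -> R) (x : 'I_n -> R) :
  continuous (fun w : 'rV[R]_r =>
    \sum_(i < n) (Num.min (x i - \sum_(j < r) w ord0 j * B j i) 0) ^+ 2).
Proof.
apply: (@continuous_big R 'I_n +%R 0 predT add_continuous 'rV[R]_r (index_enum _)) => i _.
have hS : continuous (fun w : 'rV[R]_r => \sum_(j < r) w ord0 j * B j i).
  apply: cont_sum => j w.
  apply: (@continuousM R _ (fun w : 'rV[R]_r => w ord0 j) (fun=> B j i)).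
    exact: coord_continuous.
  exact: cst_continuous.
have hm : continuous (fun w : 'rV[R]_r => Num.min (x i - \sum_(j < r) w ord0 j * B j i) 0).
  apply: (@min_fun_continuous _ _ R (fun w : 'rV[R]_r => x i - \sum_(j < r) w ord0 j * B j i) (fun=> 0)).
    move=> w; apply: (@continuousB R R^o).
      exact: cst_continuous.
    exact: hS.
  exact: cst_continuous.
move=> w.
rewrite (_ : (fun w0 : 'rV[R]_r => _ ^+ 2) = (fun w0 => Num.min (x i - \sum_(j < r) w0 ord0 j * B j i) 0 * Num.min (x i - \sum_(j < r) w0 ord0 j * B j i) 0)); last by apply: funext => w0; rewrite expr2.
exact: (@continuousM R _ _ _ w (hm w) (hm w)).
Qed.

Lemma duality (R : realType) n r (B : 'I_r -> 'I_n -> R) (x : 'I_n -> R) :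
  (0 < r)%N ->
  (forall y : 'I_n -> R, (forall i, y i < 0) ->
     exists j, dotR x y <= dotR (B j) y) ->
  exists w : 'I_r -> R, (forall j, 0 <= w j) /\ \sum_(j < r) w j = 1 /\
     forall i, \sum_(j < r) w j * B j i <= x i.
Proof.
move=> r0 H.
pose f := fun w : 'rV[R]_r =>
    \sum_(i < n) (Num.min (x i - \sum_(j < r) w ord0 j * B j i) 0) ^+ 2.
pose S := [set w : 'rV[R]_r | forall j, `[0, 1]%classic (w ord0 j)] `&`
          [set w : 'rV[R]_r | \sum_(j < r) w ord0 j = 1].
have Sc : compact S.
  apply: compact_closedI.
    by apply: (@rV_compact R r (fun=> `[0, 1]%classic)) => j; exact: segment_compact.
  have := (proj1 (continuous_closedP _) (@cont_sum R r (fun j w => w ord0 j)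
            (fun j => @coord_continuous R 1 r ord0 j)) _ (@closed_eq R 1)).
  done.
pose j0 := Ordinal r0.
have Sne : S !=set0.
  exists (\row_j (j == j0)%:R); split => [j|] /=.
    by rewrite mxE in_itv /=; case: (j == j0) => /=; rewrite ?ler01 ?lexx.
  rewrite (eq_bigr (fun j => (j == j0)%:R * 1)); first exact: delta_sum.
  by move=> j _; rewrite mxE mulr1.
have fc : {within S, continuous f} by apply: continuous_subspaceT; exact: cont_f.
have [w0 w0S w0min] := compact_EVT_min Sne Sc fc.
move: w0S; rewrite inE => -[w0b w0s].
pose wv := fun j => w0 ord0 j.
pose p := fun i => \sum_(j < r) wv j * B j i.
pose d := fun i => Num.min (x i - p i) 0.
have [hall|hex] := pselect (forall i, p i <= x i).
  exists wv; split; last by split.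
  by move=> j; have := w0b j; rewrite /= in_itv => /andP[].
have [i0 hi0] : exists i0, x i0 < p i0.
  apply: contrapT => hn; apply: hex => i; rewrite leNgt; apply/negP => h.
  by apply: hn; exists i.
have key : forall j, \sum_(i < n) d i * (B j i - p i) <= 0.
  move=> j; apply: (@A_le0 R _ (\sum_(i < n) (B j i - p i) ^+ 2)).
    by apply: sumr_ge0 => i _; exact: sqr_ge0.
  move=> t t0 t1.
  pose wt := \row_k ((1 - t) * wv k + t * (k == j)%:R).
  have wtS : wt \in S.
    apply: mem_set; split => [k|] /=.
      rewrite mxE in_itv /=; have := w0b k; rewrite /= in_itv => /andP[h1 h2].
      exact: conv01.
    rewrite (eq_bigr (fun k => (1 - t) * wv k + t * ((k == j)%:R * 1))); last first.
      by move=> k _; rewrite mxE mulr1.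
    by rewrite big_split /= -!mulr_sumr delta_sum w0s; ring.
  have := w0min wt wtS.
  have e : forall i, \sum_(k < r) wt ord0 k * B k i = p i + t * (B j i - p i).
    move=> i; rewrite (eq_bigr (fun k => (1 - t) * (wv k * B k i) + t * ((k == j)%:R * B k i))); last first.
      by move=> k _; rewrite mxE; ring.
    rewrite big_split /= -!mulr_sumr delta_sum /p; ring.
  have fwt : f wt = \sum_(i < n) Num.min ((x i - p i) - t * (B j i - p i)) 0 ^+ 2.
    by rewrite /f; apply: eq_bigr => i _; rewrite e; congr (Num.min _ _ ^+ 2); ring.
  rewrite fwt => hle.
  have hsum : \sum_(i < n) Num.min (x i - p i - t * (B j i - p i)) 0 ^+ 2 <=
     \sum_(i < n) (Num.min (x i - p i) 0 ^+ 2 - 2 * t * (B j i - p i) * Num.min (x i - p i) 0 + t ^+ 2 * (B j i - p i) ^+ 2).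
    by apply: ler_sum => i _; exact: phi_ineq.
  have eq2 : \sum_(i < n) (Num.min (x i - p i) 0 ^+ 2 - 2 * t * (B j i - p i) * Num.min (x i - p i) 0 + t ^+ 2 * (B j i - p i) ^+ 2)
     = \sum_(i < n) d i ^+ 2 - 2 * t * (\sum_(i < n) d i * (B j i - p i)) + t ^+ 2 * \sum_(i < n) (B j i - p i) ^+ 2.
    rewrite !big_split /= sumrN !mulr_sumr; congr (_ - _ + _); apply: eq_bigr => i _; rewrite /d; ring.
  move: hsum; rewrite eq2 => hsum.
  have : \sum_(i < n) d i ^+ 2 = f w0 by [].
  lra.
have dle0 : forall i, d i <= 0 by move=> i; rewrite /d ge_min lexx orbT.
pose L := \sum_(j < r) \sum_(i < n) `|x i - B j i|.
have L0 : 0 <= L by apply: sumr_ge0 => j _; apply: sumr_ge0 => i _.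
pose delta := (x i0 - p i0) ^+ 2.
have delta0 : 0 < delta by rewrite /delta exprn_even_gt0 //= subr_eq0 lt_eqF.
pose eps := delta / (2 * (L + 1)).
have eps0 : 0 < eps by rewrite /eps divr_gt0 //; lra.
have epsL : eps * L <= delta / 2.
  have : eps * (2 * (L + 1)) = delta by rewrite /eps; field; lra.
  nra.
pose y := fun i => d i - eps.
have [j hj] : exists j, dotR x y <= dotR (B j) y.
  by apply: H => i; have := dle0 i; rewrite /y; lra.
have E1 : dotR x y - dotR (B j) y = \sum_(i < n) (x i - p i) * d i
    - \sum_(i < n) d i * (B j i - p i) - eps * \sum_(i < n) (x i - B j i).
  rewrite /dotR -sumrB mulr_sumr -sumrB -sumrB; apply: eq_bigr => i _; rewrite /y; ring.
have E2 : delta <= \sum_(i < n) (x i - p i) * d i.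
  rewrite (eq_bigr (fun i => d i ^+ 2)); last by move=> i _; rewrite /d mn_sq.
  rewrite (bigD1 i0) //=.
  have -> : d i0 = x i0 - p i0 by rewrite /d min_l // ltW // subr_lt0.
  by rewrite /delta lerDl sumr_ge0 // => i _; exact: sqr_ge0.
have E3 : \sum_(i < n) (x i - B j i) <= L.
  apply: (@le_trans _ _ (\sum_(i < n) `|x i - B j i|)).
    by apply: ler_sum => i _; exact: ler_norm.
  rewrite /L (bigD1 j) //= lerDl; apply: sumr_ge0 => k _; exact: sumr_ge0.
have E4 : eps * \sum_(i < n) (x i - B j i) <= eps * L by rewrite ler_wpM2l // ltW.
have := key j.
lra.
Qed.
Lemma mono (R : realType) n (g : ('I_n -> R) -> R) : increasing_each_var g ->
  forall y y', negOrthant y -> negOrthant y' -> (forall i, y' i <= y i) -> g y' <= g y.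
Proof.
move=> hinc y y' hy hy' hle.
pose z (k : nat) := fun i : 'I_n => if (i < k)%N then y i else y' i.
have zU : forall k, negOrthant (z k) by move=> k i; rewrite /z; case: ifP.
have step : forall k, g y' <= g (z k).
  elim=> [|k IH].
    by rewrite (_ : z 0%N = y') //; apply: funext => i; rewrite /z ltn0.
  apply: (le_trans IH).
  case: (ltnP k n) => hk.
    pose i := Ordinal hk.
    have hzi : z k i <= y i by rewrite /z ltnn; exact: hle.
    have := hinc (z k) i (y i) (zU k) hzi (hy i).
    suff -> : (fun j => if j == i then y i else z k j) = z k.+1 by [].
    apply: funext => j; rewrite /z ltnS.
    case: (eqVneq j i) => [->|hne] /=; first by rewrite leqnn.
    have hjk : (val j != k).
      by apply: contra hne => /eqP hj; apply/eqP/val_inj.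
    by rewrite [(j <= k)%N]leq_eqVlt (negbTE hjk).
  suff -> : z k.+1 = z k by [].
  apply: funext => j; rewrite /z.
  have h1 : (j < k)%N by apply: leq_trans (ltn_ord j) hk.
  by rewrite ltnS (ltnW h1) h1.
have -> : y = z n by apply: funext => i; rewrite /z ltn_ord.
exact: step.
Qed.
Lemma dotZr (R : realType) n (v y : 'I_n -> R) (t : R) :
  dotR v (fun i => t * y i) = t * dotR v y.
Proof. by rewrite /dotR mulr_sumr; apply: eq_bigr => i _; ring. Qed.

Lemma dotZl (R : realType) n (v y : 'I_n -> R) (t : R) :
  dotR (fun i => t * v i) y = t * dotR v y.
Proof. by rewrite /dotR mulr_sumr; apply: eq_bigr => i _; ring. Qed.

Theorem proposition3p5 (R : realType) (n r : nat) (g : ('I_n -> R) -> R)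
  (c : R) (b : 'I_r -> 'I_n -> nat) :
  toric_psh_rep g -> (0 < r)%N -> 0 < c -> near0_log_sing g c b ->
  newton_body g = scaled_hull_plus_orthant c b.
Proof.
move=> [hconv hinc] r0 c0 [a [M0 [a0 hM]]].
apply/seteqP; split => x.
  move=> [M hM'].
  pose B := fun j i => c * (b j i)%:R.
  have hB : forall j y, dotR (B j) y = c * dotR (natvec (b j)) y.
    by move=> j y; rewrite -dotZl.
  have hyp : forall y : 'I_n -> R, (forall i, y i < 0) ->
     exists j, dotR x y <= dotR (B j) y.
    move=> y hy; apply: contrapT => hn.
    have hlt : forall j, dotR (B j) y < dotR x y.
      by move=> j; rewrite ltNge; apply/negP => h; apply: hn; exists j.
    have [j1 _ hj1] := @arg_maxP _ _ _ (Ordinal r0) predT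
       (fun j => dotR (natvec (b j)) y) isT.
    pose m := dotR (natvec (b j1)) y.
    pose delta := dotR x y - c * m.
    have delta0 : 0 < delta by have := hlt j1; rewrite hB /delta /m; lra.
    pose K := M + M0 + c / 2 * ln (r%:R : R).
    pose T := 1 + `|K| / delta + \sum_(i < n) a / y i.
    have hay : forall i, 0 < a / y i.
      by move=> i; rewrite -divrNN divr_gt0 // oppr_gt0 ?hy.
    have hsum_ge : forall i, a / y i <= \sum_(k < n) a / y k.
      move=> i; rewrite (bigD1 i) //= lerDl; apply: sumr_ge0 => k _; exact: ltW.
    have hK0 : 0 <= `|K| / delta by rewrite divr_ge0 // ltW.
    have hS0 : 0 <= \sum_(k < n) a / y k by apply: sumr_ge0 => k _; exact: ltW.
    have T0 : 0 < T by rewrite /T; lra.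
    pose yt := fun i => T * y i.
    have hyt : forall i, yt i < a.
      move=> i; have h1 := hsum_ge i.
      have h2 : a / y i < T by rewrite /T; lra.
      have e : a = (a / y i) * y i by rewrite divfK // lt_eqF ?hy.
      by rewrite /yt [X in _ < X]e ltr_nM2r ?hy.
    have hytU : negOrthant yt by move=> i; rewrite /yt /= pmulr_rlt0 // hy.
    have := hM' yt hytU; rewrite /yt dotZr => hN.
    have := hM yt hyt; rewrite ler_norml => /andP[_ hup].
    have hS : \sum_(j < r) expR (2 * dotR (natvec (b j)) yt) <= r%:R * expR (2 * (T * m)).
      apply: (@le_trans _ _ (\sum_(j < r) expR (2 * (T * m)))).
        apply: ler_sum => j _; rewrite ler_expR /yt dotZr.
        by rewrite ler_pM2l // ler_pM2l //; exact: (hj1 j isT).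
      by rewrite sumr_const card_ord [(r%:R : R) * _]mulr_natl.
    have hSpos : 0 < \sum_(j < r) expR (2 * dotR (natvec (b j)) yt).
      rewrite (bigD1 (Ordinal r0)) //=.
      have := expR_gt0 (2 * dotR (natvec (b (Ordinal r0))) yt).
      have : 0 <= \sum_(j < r | j != Ordinal r0) expR (2 * dotR (natvec (b j)) yt).
        by apply: sumr_ge0 => j _; exact: ltW (expR_gt0 _).
      lra.
    have hr : 0 < (r%:R : R) by rewrite ltr0n.
    have hln : ln (\sum_(j < r) expR (2 * dotR (natvec (b j)) yt)) <= ln (r%:R : R) + 2 * (T * m).
      rewrite -[X in _ <= _ + X]expRK -lnM ?posrE ?expR_gt0 //.
      by rewrite ler_ln ?posrE // mulr_gt0 // expR_gt0.
    have hc2 := ler_wpM2l (ltW (divr_gt0 c0 (ltr0Sn R 1))) hln.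
    have hTd : T * delta = T * dotR x y - c * (T * m) by rewrite /delta; ring.
    have hTd2 : T * delta = delta + `|K| + (\sum_(i < n) a / y i) * delta.
      by rewrite /T; field; rewrite lt0r_neq0.
    have := mulr_ge0 hS0 (ltW delta0).
    have := ler_norm K.
    rewrite /K in hTd2 *.
    move: hup hN; rewrite /yt => hup hN.
    lra.
  have [w [w0 [w1 wx]]] := @duality R n r B x r0 hyp.
  exists (fun i => \sum_(j < r) w j * (b j i)%:R),
         (fun i => x i - c * \sum_(j < r) w j * (b j i)%:R).
  split; first by exists w.
  split.
    move=> i; rewrite subr_ge0 mulr_sumr; apply: le_trans (wx i).
    by rewrite le_eqVlt; apply/orP; left; apply/eqP/eq_bigr => j _; rewrite /B; ring.
  by apply: funext => i; ring.
move=> [p [q [[w [w0 [w1 hp]]] [q0 hx]]]].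
rewrite hx.
exists (M0 + (1 - a) * \sum_(i < n) c * p i).
move=> y hy.
pose y' := fun i => Num.min (y i) (a - 1).
have hy'a : forall i, y' i < a.
  by move=> i; rewrite /y' /= gt_min; apply/orP; right; lra.
have hy'U : negOrthant y' by move=> i; have := hy'a i; lra.
have hy'le : forall i, y' i <= y i by move=> i; rewrite /y' /= ge_min lexx.
have hy_le : forall i, y i <= y' i + (1 - a).
  move=> i; rewrite /y' /=; have := hy i.
  by have [h|h] := lerP (y i) (a - 1); lra.
have hmono := @mono R n g hinc y y' hy hy'U hy'le.
have := hM y' hy'a; rewrite ler_norml => /andP[hlow _].
have hp0 : forall i, 0 <= p i.
  by move=> i; rewrite hp; apply: sumr_ge0 => j _; rewrite mulr_ge0.
set S' := \sum_(j < r) expR (2 * dotR (natvec (b j)) y') in hlow.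
have hlnj : forall j, c * dotR (natvec (b j)) y' <= c / 2 * ln S'.
  move=> j.
  have hS : expR (2 * dotR (natvec (b j)) y') <= S'.
    rewrite /S' (bigD1 j) //= lerDl; apply: sumr_ge0 => k _; exact: ltW (expR_gt0 _).
  have : 2 * dotR (natvec (b j)) y' <= ln S'.
    by rewrite -[X in X <= _]expRK ler_ln ?posrE ?expR_gt0 // (lt_le_trans (expR_gt0 _) hS).
  nra.
have hconvx : dotR (fun i => c * p i) y' <= c / 2 * ln S'.
  have e : dotR (fun i => c * p i) y' = \sum_(j < r) w j * (c * dotR (natvec (b j)) y').
    rewrite /dotR hp.
    rewrite (eq_bigr (fun i => \sum_(j < r) w j * (c * ((b j i)%:R * y' i)))); last first.
      by move=> i _; rewrite mulr_sumr mulr_suml; apply: eq_bigr => j _; ring.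
    rewrite exchange_big; apply: eq_bigr => j _; rewrite /natvec !mulr_sumr.
    by apply: eq_bigr => i _; ring.
  rewrite e; apply: (@le_trans _ _ (\sum_(j < r) w j * (c / 2 * ln S'))).
    by apply: ler_sum => j _; rewrite ler_wpM2l.
  by rewrite -mulr_suml w1 mul1r.
have hdot : dotR (fun i => c * p i + q i) y <= dotR (fun i => c * p i) y' + (1 - a) * \sum_(i < n) c * p i.
  rewrite /dotR mulr_sumr -big_split; apply: ler_sum => i _ /=.
  have hcp : 0 <= c * p i by rewrite mulr_ge0 // ltW.
  have h1 : 0 <= c * p i * (y' i + (1 - a) - y i) by rewrite mulr_ge0 // subr_ge0 hy_le.
  have h2 : 0 <= q i * - y i by rewrite mulr_ge0 // oppr_ge0 ltW.
  nra.
lra.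
Qed.
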